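(* Let $M$ be a countable $\aleph_0$-categorical structure with no algebraicity that admits weak elimination of imaginaries. Then for all $A,B\subseteq M$, $$\mathrm{acl}^{eq}A\cap \mathrm{acl}^{eq}B=\mathrm{dcl}^{eq}(A\cap B).$$
   Context: $G=\operatorname{Aut}(M)$; for finite $A$, $G_A$ is the pointwise stabilizer. $M^{eq}$ is the disjoint union of $M^k/E$ over all $k$ and all $G$-invariant equivalence relations $E$ on $M^k$, with $M\subseteq M^{eq}$ via equality on $M^1$. For finite $A\subseteq M^{eq}$: $\mathrm{acl}^{eq}A=\{e: G_A\cdot e \text{ finite}\}$, $\mathrm{dcl}^{eq}A=\{e: G_A\cdot e=\{e\}\}$; for infinite $A$ take the union over finite subsets. No algebraicity: for every finite $A\subseteq M$, all $G_A$-orbits on $M\setminus A$ are infinite. Weak elimination of imaginaries: for every $e\in M^{eq}$ there is a real tuple $\bar a$ with $e\in\mathrm{dcl}^{eq}\bar a$ and $\bar a\in\mathrm{acl}^{eq}e$. *)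

(* Defs.v *)
From Stdlib Require Import List.
From mathcomp Require Import ssreflect ssrfun ssrbool eqtype ssrnat fintype.

Set Implicit Arguments.
Unset Strict Implicit.
Unset Printing Implicit Defensive.

Section Defs.
Variable M : Type.

(** A (relational) structure on M: a family of relations indexed by symbols
    [l : L], each relation a predicate on finite tuples (lists) of M. *)

Definition Aut (L : Type) (R : L -> list M -> Prop) (g : M -> M) : Prop :=
  bijective g /\ forall (l : L) (s : list M), R l (List.map g s) <-> R l s.

Variable G : (M -> M) -> Prop.

Definition countable_type : Prop := exists f : M -> nat, injective f.

(** G is oligomorphic: finitely many G-orbits on M^n for every n
    (Ryll-Nardzewski characterisation of aleph_0-categoricity). *)
Definition oligomorphic : Prop :=
  forall n : nat, exists reps : list ('I_n -> M),
    forall a : 'I_n -> M, exists r g,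
      List.In r reps /\ G g /\ forall i, a i = g (r i).

(** Imaginaries: an element of M^k/E is given by its sort (k, E) and a
    representative k-tuple. *)
Record imag := Imag {
  isort : nat;
  irel : ('I_isort -> M) -> ('I_isort -> M) -> Prop;
  irep : 'I_isort -> M }.
Arguments irel : clear implicits.
Arguments irep : clear implicits.

Definition is_imag (e : imag) : Prop :=
  (forall a, irel e a a) /\
  (forall a b, irel e a b -> irel e b a) /\
  (forall a b c, irel e a b -> irel e b c -> irel e a c) /\
  (forall g, G g -> forall a b, irel e a b <-> irel e (g \o a) (g \o b)).

Definition realI (x : M) : imag :=
  @Imag 1 (fun a b => forall i, a i = b i) (fun _ => x).

Definition fixes (g : M -> M) (e : imag) : Prop := irel e (g \o irep e) (irep e).

Definition stab (A : list imag) (g : M -> M) : Prop :=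
  G g /\ forall e, List.In e A -> fixes g e.

Definition acl_fin (A : list imag) (e : imag) : Prop :=
  exists hs : list (M -> M),
    (forall h, List.In h hs -> stab A h) /\
    forall g, stab A g -> exists h, List.In h hs /\ irel e (g \o irep e) (h \o irep e).

Definition dcl_fin (A : list imag) (e : imag) : Prop :=
  forall g, stab A g -> fixes g e.

(** acl^eq and dcl^eq of an arbitrary set A of real elements:
    union over finite subsets. *)
Definition aclR (A : M -> Prop) (e : imag) : Prop :=
  exists l : list M, (forall x, List.In x l -> A x) /\ acl_fin (List.map realI l) e.

Definition dclR (A : M -> Prop) (e : imag) : Prop :=
  exists l : list M, (forall x, List.In x l -> A x) /\ dcl_fin (List.map realI l) e.

(** No algebraicity: for every finite A ⊆ M, all G_A-orbits on M \ A are infinite. *)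
Definition no_algebraicity : Prop :=
  forall (A : list M) (x : M), ~ List.In x A -> ~ acl_fin (List.map realI A) (realI x).

Definition weak_EI : Prop :=
  forall e : imag, is_imag e ->
    exists abar : list M,
      dcl_fin (List.map realI abar) e /\
      forall x, List.In x abar -> acl_fin (e :: nil) (realI x).

End Defs.

(* Main.v *)
Require Import Defs.
From Stdlib Require Import List.
From mathcomp Require Import ssreflect ssrfun ssrbool eqtype ssrnat fintype.
From Stdlib Require Import Classical FunctionalExtensionality.

Lemma pick_list (M : Type) (Q : (M -> M) -> Prop) (x : M) (ys : list M) :
  exists hs : list (M -> M), (forall h, In h hs -> Q h) /\
    forall g, Q g -> In (g x) ys -> exists h, In h hs /\ h x = g x.
Proof.
elim: ys => [|y ys [hs [H1 H2]]].
  by exists nil; split => // g _ [].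
case: (classic (exists g, Q g /\ g x = y)) => [[g0 [Qg0 Eg0]]|Hn].
  exists (g0 :: hs); split.
    by move=> h /= [<-|/H1].
  move=> g Qg /= [Ey|Iy].
    by exists g0; split; [left|rewrite Eg0].
  by have [h [Ih Eh]] := H2 g Qg Iy; exists h; split; [right|].
exists hs; split => // g Qg /= [Ey|Iy]; last exact: H2.
by exfalso; apply: Hn; exists g.
Qed.

Lemma stab_real (M L : Type) (R : L -> list M -> Prop) (l : list M) g :
  stab (Aut R) (map (@realI M) l) g <-> Aut R g /\ forall a, In a l -> g a = a.
Proof.
split=> [[Gg Hf]|[Gg Hf]]; split=> //.
  move=> a Ia; have := Hf (realI a); rewrite /fixes /= => H.
  by apply: (H _ ord0); apply/in_map_iff; exists a.
move=> e /in_map_iff [a [<- Ia]] i /=; exact: Hf.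
Qed.

Lemma acl_trans (M L : Type) (R : L -> list M -> Prop) (l : list M) (e : imag M) x :
  is_imag (Aut R) e ->
  acl_fin (Aut R) (map (@realI M) l) e -> acl_fin (Aut R) (e :: nil) (realI x) ->
  acl_fin (Aut R) (map (@realI M) l) (realI x).
Proof.
move=> [_ [_ [_ Hinv]]] [hs1 [Hs1 Ho1]] [hs2 [Hs2 Ho2]].
pose ys := flat_map (fun h1 => map (fun h2 : M -> M => h1 (h2 x)) hs2) hs1.
have [hs [Hs Ho]] := @pick_list M (stab (Aut R) (map (@realI M) l)) x ys.
exists hs; split => // g Sg.
suff Iy : In (g x) ys.
  have [h [Ih Eh]] := Ho g Sg Iy; exists h; split => // i /=; by rewrite Eh.
have [h1 [Ih1 E1]] := Ho1 g Sg.
have [[Bh1 Rh1] Fh1] := Hs1 h1 Ih1.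
have Gh1 : Aut R h1 by split.
have [h1' c1 c2] := Bh1.
have Gh1' : Aut R h1'.
  split; first by exists h1.
  move=> l0 s; rewrite -(Rh1 l0 (map h1' s)) map_map.
  suff -> : map (fun y => h1 (h1' y)) s = s by []; by elim: s => //= a s ->; rewrite c2.
have [Gg Fg] := Sg.
have Gc : Aut R (h1' \o g).
  have [[g' g1 g2] Rg] : bijective g /\ _ := Gg.
  split; first by exists (g' \o h1) => y /=; [rewrite c2 g1|rewrite g2 c1].
  move=> l0 s; rewrite -map_map.
  by have [_ ->] := Gh1'; rewrite Rg.
have Sc : stab (Aut R) (e :: nil) (h1' \o g).
  split => // e' /= [Ee|[]]; rewrite -Ee.
  rewrite /fixes; have := proj1 (Hinv h1' Gh1' _ _) E1.
  suff -> : h1' \o (h1 \o @irep M e) = @irep M e by [].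
  by apply: functional_extensionality => y /=; rewrite c1.
have [h2 [Ih2 E2]] := Ho2 _ Sc.
have E : g x = h1 (h2 x).
  by have /= <- := E2 ord0; rewrite c2.
rewrite E; apply/in_flat_map; exists h1; split => //.
by apply/in_map_iff; exists h2.
Qed.

Theorem mainTheorem3 (M L : Type) (R : L -> list M -> Prop)
  (Mcount : countable_type M)
  (Holig : oligomorphic (Aut R))
  (Hnoalg : no_algebraicity (Aut R))
  (Hwei : weak_EI (Aut R))
  (A B : M -> Prop) (e : imag M) (He : is_imag (Aut R) e) :
  (aclR (Aut R) A e /\ aclR (Aut R) B e) <-> dclR (Aut R) (fun x => A x /\ B x) e.
Proof.
split.
  move=> [[lA [HA aA]] [lB [HB aB]]].
  have [ab [Dab Aab]] := Hwei e He.
  have inl l0 x : acl_fin (Aut R) (map (@realI M) l0) e -> In x ab -> In x l0.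
    move=> a0 Ix; apply: NNPP => Hn; apply: (Hnoalg l0 x Hn).
    exact: acl_trans He a0 (Aab x Ix).
  exists ab; split => // x Ix; split; [apply: HA|apply: HB]; exact: inl.
move=> [l [Hl Dl]].
have aclid : forall C : M -> Prop, (forall x, In x l -> C x) -> aclR (Aut R) C e.
  move=> C HC; exists l; split => //; exists (id :: nil); split.
    move=> h /= [<-|[]]; apply/stab_real; split => //.
    split; first by exists id.
    by move=> l0 s; rewrite map_id.
  move=> g Sg; exists id; split; first by left.
  exact: Dl.
by split; apply: aclid => x /Hl [].
Qed.
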